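(* Let $K\subseteq\mathbb{R}^d$ be a proper locally anti-blocking body and $i\in\{1,\dots,d\}$. Then $$\mu_i(K)=\max\Big\{\mu(K\cap L_I): I\subseteq\{1,\dots,d\},\ |I|=i\Big\},$$ where $L_I=\operatorname{span}_{\mathbb{R}}\{e_k:k\in I\}$ and $\mu(K\cap L_I)$ is the covering radius of $K\cap L_I$ with respect to $\mathbb{Z}^d\cap L_I$ inside $L_I$.
   Context: A convex body is a full-dimensional compact convex set. For $I\subseteq\{1,\dots,d\}$, $L_I$ is the coordinate subspace spanned by the standard basis vectors $e_k$, $k\in I$, and $\pi_{L_I}$ the orthogonal projection onto it. A convex body $K\subseteq\mathbb{R}^d$ is locally anti-blocking if $K\cap L_I=\pi_{L_I}(K)$ for every $I\subseteq\{1,\dots,d\}$; it is proper if it contains the origin in its interior. For $i\in\{1,\dots,d\}$, $\mu_i(K)=\min\{\mu\ge0:(\mu K+\mathbb{Z}^d)\cap U\ne\emptyset$ for every $(d-i)$-dimensional affine subspace $U\subseteq\mathbb{R}^d\}$. For a convex body $C$ in a subspace $E$ with lattice $\Gamma\subseteq E$, the covering radius is $\min\{\mu\ge0:\mu C+\Gamma=E\}$. *)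

(* Defs.v *)
From HB Require Import structures.
From mathcomp Require Import all_boot all_order all_algebra.
From mathcomp Require Import all_classical all_reals all_analysis.
Set Implicit Arguments. Unset Strict Implicit. Unset Printing Implicit Defensive.
Import Order.TTheory GRing.Theory Num.Theory.
Import numFieldNormedType.Exports.
Local Open Scope classical_set_scope.
Local Open Scope ring_scope.

Section Defs.
Variables (R : realType) (d : nat).
Local Notation V := 'rV[R]_d.

Definition convex_set (K : set V) : Prop :=
  forall x y, K x -> K y -> forall t : R, 0 <= t <= 1 -> K (t *: x + (1 - t) *: y).

Definition convex_body (K : set V) : Prop :=
  convex_set K /\ compact K /\ (interior K !=set0).

Definition proper_body (K : set V) : Prop := interior K 0.

Definition coord_sub (I : {set 'I_d}) : set V :=
  [set x | forall j, j \notin I -> x 0 j = 0].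

Definition proj_sub (I : {set 'I_d}) (x : V) : V :=
  \row_j (if j \in I then x 0 j else 0).

Definition locally_anti_blocking (K : set V) : Prop :=
  forall I : {set 'I_d}, K `&` coord_sub I = proj_sub I @` K.

Definition int_lattice : set V := [set z | forall j, z 0 j \is a Num.int].

Definition affine_subspace (k : nat) (U : set V) : Prop :=
  exists (p : V) (A : 'M[R]_(k, d)),
    \rank A = k /\ U = [set p + u *m A | u in [set: 'rV[R]_k]].

Definition mu_i (K : set V) (i : nat) : R :=
  inf [set mu : R | 0 <= mu /\
        forall U, affine_subspace (d - i) U ->
          exists k z, K k /\ int_lattice z /\ U (mu *: k + z)].

Definition cov_radius (E C G : set V) : R :=
  inf [set mu : R | 0 <= mu /\
        [set y | exists c g, C c /\ G g /\ y = mu *: c + g] = E].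

End Defs.

(* Main.v *)
Require Import Defs.
From HB Require Import structures.
From mathcomp Require Import all_boot all_order all_algebra.
From mathcomp Require Import all_classical all_reals all_analysis.
Import Order.TTheory GRing.Theory Num.Theory.
Import numFieldNormedType.Exports.
Local Open Scope classical_set_scope.
Local Open Scope ring_scope.

Lemma L1 (R : realType) (d k : nat) (A : 'M[R]_(k, d)) (p : 'rV[R]_d) :
  \rank A = k -> exists J : {set 'I_d}, #|J| = (d - k)%N /\
    exists u : 'rV[R]_k, coord_sub J (p + u *m A).
Proof.
move=> rkA.
have fA : row_full A^T by rewrite /row_full mxrank_tr rkA.
set f := fullrankfun fA.
have finj : injective f := @fullrankfun_inj _ _ _ _ fA.
have Bu : (rowsub f A^T)^T \in unitmx by rewrite unitmx_tr fullrowsub_unit.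
set B := (rowsub f A^T)^T in Bu.
pose u := - (colsub f p) *m invmx B.
exists (~: [set f x | x in 'I_k]); split.
  have := cardsC [set f x | x in 'I_k].
  rewrite card_imset // card_ord => H.
  transitivity (#|'I_d| - k)%N; first by rewrite -H addKn.
  by rewrite card_ord.
exists u => j; rewrite finset.in_setC negbK => /imsetP [x _ ->].
have : (u *m B) = - colsub f p by rewrite /u mulmxKV.
move=> /matrixP /(_ 0 x); rewrite !mxE => H.
rewrite [X in _ + X](_ : _ = \sum_j0 u 0 j0 * B j0 x).
  by rewrite H addrN.
by apply: eq_bigr => r _; rewrite !mxE.
Qed.

Lemma L2 (R : realType) (d k : nat) (I : {set 'I_d}) :
  k = #|~: I| -> exists A : 'M[R]_(k, d), \rank A = k /\
    forall (u : 'rV[R]_k) j, j \in I -> (u *m A) 0 j = 0.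
Proof.
move=> ->.
pose e := @enum_val _ (mem (~: I)).
pose A : 'M[R]_(#|~: I|, d) := \matrix_(r, j) ((j == e r)%:R).
exists A; split.
  apply/eqP; rewrite eqn_leq rank_leq_row /=.
  have H1 : A *m A^T = 1%:M.
    apply/matrixP => r s; rewrite !mxE (bigD1 (e r)) //= big1.
      rewrite !mxE eqxx mul1r addr0 (inj_eq enum_val_inj).
      by rewrite eq_sym.
    by move=> j /negPf; rewrite /A !mxE => ->; rewrite mul0r.
  by have := mxrankM_maxl A A^T; rewrite H1 mxrank1.
move=> u j jI; rewrite mxE big1 // => r _; rewrite /A mxE.
have : e r \in ~: I by apply: enum_valP.
rewrite finset.in_setC; case: eqP => [<- | _]; first by rewrite jI.
by rewrite mulr0.
Qed.
Definition SI (R : realType) (d : nat) (K : set 'rV[R]_d) (I : {set 'I_d}) :=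
  [set mu : R | 0 <= mu /\
        [set y | exists c g, (K `&` coord_sub I) c /\ (@int_lattice R d `&` coord_sub I) g
           /\ y = mu *: c + g] = coord_sub I].

Arguments SI {R d}.

Lemma SI_sub (R : realType) (d : nat) (K : set 'rV[R]_d) (I : {set 'I_d}) mu :
  [set y | exists c g, (K `&` coord_sub I) c /\ (@int_lattice R d `&` coord_sub I) g
           /\ y = mu *: c + g] `<=` coord_sub I.
Proof.
move=> y [c [g [[_ cI] [[_ gI] ->]]]] j jI.
rewrite !mxE (cI j jI) mulr0 add0r; exact: gI.
Qed.

Lemma SI_ne (R : realType) (d : nat) (K : set 'rV[R]_d) (I : {set 'I_d}) (e : R) :
  0 < e -> ball (0 : 'rV[R]_d) e `<=` K -> SI K I (2 / e).
Proof.
move=> e0 bK; have m0 : 0 < 2 / e by rewrite divr_gt0.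
split; first exact: ltW.
apply/seteqP; split; first exact: SI_sub.
move=> y yI.
pose g : 'rV[R]_d := \row_j ((Num.floor (y 0 j))%:~R).
have gI : coord_sub I g by move=> j jI; rewrite mxE yI // floor0.
pose c : 'rV[R]_d := (2 / e)^-1 *: (y - g).
exists c, g; split; last split.
- split; last by move=> j jI; rewrite /c /g !mxE (yI j jI) floor0 subrr mulr0.
  apply: bK. rewrite -ball_normE /ball_ /= sub0r normrN /c.
  rewrite normrZ.
  have : `|y - g| <= 1.
    rewrite [X in X <= _]mx_normrE; apply: bigmax_le => // [[a b]] _ /=.
    rewrite !mxE ord1 /=; have := floor_itv (y 0 b).
    rewrite intrD => /andP [h1 h2].
    by rewrite ger0_norm ?subr_ge0 // lerBlDl ltW.
  move=> h; rewrite invf_div ger0_norm ?divr_ge0 ?ltW //.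
  apply: (le_lt_trans (ler_wpM2l _ h)); first by rewrite divr_ge0 ?ltW.
  by rewrite mulr1 ltr_pdivrMr // ltr_pMr // ltr1n.
- split; last exact: gI.
  by move=> j; rewrite mxE intr_int.
- by rewrite scalerA mulfV ?gt_eqF // scale1r subrK.
Qed.

Theorem corollary3p3 (R : realType) (d : nat) (K : set 'rV[R]_d) (i : nat) :
  convex_body K -> proper_body K -> locally_anti_blocking K ->
  (1 <= i <= d)%N ->
  mu_i K i =
  \big[Num.max/0]_(I : {set 'I_d} | #|I| == i)
     cov_radius (coord_sub I) (K `&` coord_sub I) (@int_lattice R d `&` coord_sub I).
Proof.
move=> [cvxK [cptK _]] prop lab /andP[i1 id].
have := prop; rewrite /proper_body /interior => /nbhs_ballP [e e0 bK].
have K0 : K 0 by apply: bK; apply: ballxx.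
have Kc : forall c t, K c -> 0 <= t <= 1 -> K (t *: c).
  move=> c t Kc t01; have := cvxK c 0 Kc K0 t t01.
  by rewrite scaler0 addr0.
have covE : forall I, cov_radius (coord_sub I) (K `&` coord_sub I)
   (@int_lattice R d `&` coord_sub I) = inf (SI K I) by [].
have hinfI : forall I, has_inf (SI K I).
  move=> I; split; first by exists (2 / e); exact: SI_ne.
  by exists 0 => x [].
set m := \big[Num.max/0]_(I : {set 'I_d} | #|I| == i) _.
have m0 : 0 <= m by apply: bigmax_ge_id.
rewrite /mu_i; set S := [set mu : R | _].
have F3 : forall δ, 0 < δ -> S (m + δ).
  move=> δ δ0; split; first by rewrite addr_ge0 // ltW.
  move=> U [p [A [rkA ->]]].
  have [J [cJ [u qJ]]] := @L1 R d (d - i) A p rkA.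
  have cJi : #|J| = i by rewrite cJ subKn.
  have hle : inf (SI K J) <= m.
    rewrite -covE /m; apply: le_bigmax_cond; exact/eqP.
  have [mu [mu0 Heq] mult] : exists2 mu, SI K J mu & mu < m + δ.
    apply: inf_lt; first exact: (hinfI J).1.
    by apply: (le_lt_trans hle); rewrite ltrDl.
  move: qJ; rewrite -Heq => -[c [g [[Kc' cI] [gZ Hq]]]].
  have md0 : 0 < m + δ by rewrite ltr_wpDl.
  exists ((mu / (m + δ)) *: c), g; split.
    apply: Kc => //; apply/andP; split; first by rewrite divr_ge0 // ltW.
    by rewrite ler_pdivrMr // mul1r ltW.
  split; first exact: gZ.1.
  exists u => //; rewrite Hq scalerA mulrCA mulfV ?gt_eqF // mulr1.
  done.
have F4 : forall mu, S mu -> forall I : {set 'I_d}, #|I| = i -> SI K I mu.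
  move=> mu [mu0 HS] I cI; split => //; apply/seteqP; split; first exact: SI_sub.
  move=> y yI.
  have h := cardsC I; rewrite card_ord in h.
  have eqk : (d - i)%N = #|~: I| by apply/eqP; rewrite -(eqn_add2l i) subnKC // -{1}cI h.
  have [A [rkA hA]] := @L2 R d (d - i) I eqk.
  have [k [z [Kk [Zz [u _ Hu]]]]] := HS [set y + u *m A | u in [set: 'rV[R]_(d - i)]]
    (ex_intro _ y (ex_intro _ A (conj rkA erefl))).
  exists (proj_sub I k), (proj_sub I z); split.
    by rewrite lab; exists k.
  split.
    split.
      by move=> j; rewrite mxE; case: ifP => _; [exact: Zz | exact: rpred0].
    by move=> j jI; rewrite mxE (negbTE jI).
  apply/rowP => j; rewrite !mxE; case: ifP => jI.
    have H0 := hA u j jI.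
    move/rowP: Hu => /(_ j).
    rewrite [(y + _) 0 j]mxE [(_ + z) 0 j]mxE [(_ *: k) 0 j]mxE H0 addr0.
    done.
  by rewrite (yI j (negbT jI)) mulr0 addr0.
have Sne : S !=set0 by exists (m + 1); apply: F3; exact: ltr01.
have Slb : lbound S 0 by move=> x [].
have hS : has_lbound S by exists 0.
apply/eqP; rewrite eq_le; apply/andP; split.
  apply/ler_addgt0Pr => δ δ0.
  exact: (ge_inf hS (F3 δ δ0)).
apply: bigmax_le; first exact: lb_le_inf Sne Slb.
move=> I /eqP cI; rewrite covE.
apply: lb_le_inf Sne _ => mu Smu.
exact: (ge_inf (hinfI I).2 (F4 mu Smu I cI)).
Qed.
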